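(* Let $\phi\colon G'\to G$ be a covering map of digraphs such that every vertex and every edge of $G$ has exactly $d$ preimages, and let $\mathcal F$ be a sheaf on $G$. Then ${\rm m.e.}(\phi^*\mathcal F)=d\cdot{\rm m.e.}(\mathcal F)$. Moreover, if the maximum excess of $\mathcal F$ is attained at $U=\bigoplus_{v\in V_G}U_v\subset\mathcal F(V)$ (with $U_v\subset\mathcal F(v)$), then the maximum excess of $\phi^*\mathcal F$ is attained at $\phi^{-1}(U)=\bigoplus_{v'\in V_{G'}}U_{\phi(v')}$.
   Context: Digraphs are finite, with tail/head maps, multiple edges and loops allowed. A sheaf $\mathcal F$ on $G$: finite-dimensional $\mathbb F$-vector spaces $\mathcal F(P)$, $P\in V_G\sqcup E_G$, with linear maps $\mathcal F(t,e)\colon\mathcal F(e)\to\mathcal F(t_Ge)$, $\mathcal F(h,e)\colon\mathcal F(e)\to\mathcal F(h_Ge)$; $\mathcal F(V)=\bigoplus_v\mathcal F(v)$, $\mathcal F(E)=\bigoplus_e\mathcal F(e)$; $d_h,d_t\colon\mathcal F(E)\to\mathcal F(V)$ send the summand $\mathcal F(e)$ into $\mathcal F(h_Ge)$ resp. $\mathcal F(t_Ge)$ via the restriction maps. For a subspace $U\subset\mathcal F(V)$, $\Gamma_{\rm ht}(U)=\bigoplus_e\{w\in\mathcal F(e):d_hw\in U,\ d_tw\in U\}$, ${\rm excess}(\mathcal F,U)=\dim\Gamma_{\rm ht}(U)-\dim U$, ${\rm m.e.}(\mathcal F)=\max_U{\rm excess}(\mathcal F,U)$. A covering map $\phi\colon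 G'\to G$ is a digraph morphism mapping, for each vertex $v$, the edges with head $v$ bijectively onto those with head $\phi(v)$ and the edges with tail $v$ bijectively onto those with tail $\phi(v)$. The pullback $\phi^*\mathcal F$ has values $\mathcal F(\phi(P))$ and restriction maps $\mathcal F(h,\phi(e)),\mathcal F(t,\phi(e))$. *)

(* Defs.v *)
From HB Require Import structures.
From mathcomp Require Import all_boot all_order all_algebra.
Set Implicit Arguments. Unset Strict Implicit. Unset Printing Implicit Defensive.
Import Order.TTheory GRing.Theory Num.Theory.
Local Open Scope ring_scope.

Record digraph := Digraph {
  vert : finType;
  edge : finType;
  tl : edge -> vert;
  hd : edge -> vert }.

(* F(v) = K^(shdimv v),
   F(e) = K^(shdime e).  The restriction map F(h,e) : F(e) -> F(h e) is given by
   its matrix: the i-th coordinate of the image of the j-th basis vector of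
   F(e) is  resh e j i  (for j < shdime e, i < shdimv (hd e); other values are
   irrelevant).  Similarly rest for F(t,e). *)
Record sheaf (K : fieldType) (G : digraph) := Sheaf {
  shdimv : vert G -> nat;
  shdime : edge G -> nat;
  resh : edge G -> nat -> nat -> K;
  rest : edge G -> nat -> nat -> K }.

(* Direct sum  \bigoplus_i K^(n i), as functions on the coordinate set. *)
Definition Fsp (K : fieldType) (I : finType) (n : I -> nat) :=
  {ffun {i : I & 'I_(n i)} -> K^o}.

Section Sheaf.
Variables (K : fieldType) (G : digraph) (F : sheaf K G).

Definition FV := Fsp K (shdimv F).
Definition FE := Fsp K (shdime F).

Definition dfun (b : bool) (w : FE) : FV :=
  [ffun s : {v : vert G & 'I_(shdimv F v)} => \sum_(e : edge G | (if b then hd e else tl e) == tag s)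
              \sum_(j : 'I_(shdime F e))
                 w (Tagged (fun e => 'I_(shdime F e)) j) *
                 (if b then resh F e j (tagged s) else rest F e j (tagged s))].

Definition dmap (b : bool) : 'Hom(FE, FV) := linfun (dfun b).
Definition d_h := dmap true.
Definition d_t := dmap false.

(* the summand F(e) inside F(E), and F(v) inside F(V) *)
Definition SuppE (e : edge G) : {vspace FE} :=
  lker (linfun (fun w : FE => [ffun s => if tag s == e then 0 else w s] : FE)).
Definition SuppV (v : vert G) : {vspace FV} :=
  lker (linfun (fun x : FV => [ffun s => if tag s == v then 0 else x s] : FV)).

Definition Gamma_ht (U : {vspace FV}) : {vspace FE} :=
  (\sum_(e : edge G) (SuppE e :&: (d_h @^-1: U) :&: (d_t @^-1: U)))%VS.

Definition excess (U : {vspace FV}) : int :=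
  (\dim (Gamma_ht U))%:Z - (\dim U)%:Z.

Definition is_max_excess (z : int) : Prop :=
  (exists U, excess U = z) /\ (forall U, excess U <= z).

Definition attains_max_excess (U : {vspace FV}) : Prop :=
  forall U', excess U' <= excess U.

End Sheaf.

Definition is_morphism (G' G : digraph) (phiV : vert G' -> vert G)
  (phiE : edge G' -> edge G) : Prop :=
  (forall e', hd (phiE e') = phiV (hd e')) /\
  (forall e', tl (phiE e') = phiV (tl e')).

Definition is_covering (G' G : digraph) (phiV : vert G' -> vert G)
  (phiE : edge G' -> edge G) : Prop :=
  is_morphism phiV phiE /\
  (forall v' e, hd e = phiV v' -> exists! e', hd e' = v' /\ phiE e' = e) /\
  (forall v' e, tl e = phiV v' -> exists! e', tl e' = v' /\ phiE e' = e).

Definition pullback (K : fieldType) (G' G : digraph) (phiV : vert G' -> vert G)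
  (phiE : edge G' -> edge G) (F : sheaf K G) : sheaf K G' :=
  Sheaf (fun v' => shdimv F (phiV v')) (fun e' => shdime F (phiE e'))
        (fun e' => resh F (phiE e')) (fun e' => rest F (phiE e')).

(* the nat-indexed coordinate i of x at vertex v (0 if out of range) *)
Definition coordV (K : fieldType) (I : finType) (n : I -> nat) (x : Fsp K n)
  (v : I) (i : nat) : K :=
  \sum_(k : 'I_(n v) | (k : nat) == i) x (Tagged (fun v => 'I_(n v)) k).

Definition liftV (K : fieldType) (G' G : digraph) (phiV : vert G' -> vert G)
  (n : vert G -> nat) (v' : vert G') :
  'Hom(Fsp K n, Fsp K (fun v' => n (phiV v'))) :=
  linfun (fun x : Fsp K n =>
    [ffun s : {w : vert G' & 'I_(n (phiV w))} =>
       if tag s == v' then coordV x (phiV v') (tagged s) else 0]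
    : Fsp K (fun v' => n (phiV v'))).

Arguments FV {K G} F.
Arguments FE {K G} F.
Arguments dfun {K G} F b w.
Arguments dmap {K G} F b.
Arguments d_h {K G} F.
Arguments d_t {K G} F.
Arguments SuppE {K G} F e.
Arguments SuppV {K G} F v.
Arguments Gamma_ht {K G} F U.
Arguments excess {K G} F U.
Arguments is_max_excess {K G} F z.
Arguments attains_max_excess {K G} F U.
Arguments liftV {K G' G} phiV n v'.
Arguments pullback {K G' G} phiV phiE F.
Arguments coordV {K I n} x v i.

(* Main.v *)
Require Import Defs.
From HB Require Import structures.
From mathcomp Require Import all_boot all_order all_algebra.
From mathcomp Require Import zify.
From Stdlib Require Import Classical.
Set Implicit Arguments. Unset Strict Implicit. Unset Printing Implicit Defensive.
Import Order.TTheory GRing.Theory Num.Theory.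
Local Open Scope ring_scope.

Lemma linfunE (K : fieldType) (aT rT : vectType K) (f : aT -> rT) (hf : linear f) x :
  linfun f x = f x.
Proof.
pose g : {linear aT -> rT} := HB.pack f (GRing.isLinear.Build _ _ _ _ f hf).
exact: (lfunE g x).
Qed.

Section Gen.
Variables (K : fieldType) (I : finType) (n : I -> nat).
Local Notation S := (Fsp K n).
Implicit Types (x y : S).

Lemma coordVE x i k : coordV x i k =
  (if (k < n i)%N as b return (k < n i)%N = b -> K then
     fun h => x (Tagged (fun i => 'I_(n i)) (Ordinal h)) else fun _ => 0) erefl.
Abort.

Lemma coordV_in x i (k : 'I_(n i)) : coordV x i k = x (Tagged (fun i => 'I_(n i)) k).
Proof.
rewrite /coordV (bigD1 k) //= big1 ?addr0 // => j /andP[/eqP hj hjk].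
by case/eqP: hjk; apply/val_inj.
Qed.

Lemma coordV_out x i k : (n i <= k)%N -> coordV x i k = 0.
Proof.
move=> h; rewrite /coordV big1 // => j /eqP hj.
by move: (ltn_ord j); rewrite hj ltnNge h.
Qed.

Lemma coordE x s : coordV x (tag s) (nat_of_ord (tagged s)) = x s.
Proof. by case: s => i k; rewrite coordV_in. Qed.

Lemma coordV_ext x y : (forall i k, coordV x i k = coordV y i k) -> x = y.
Proof. by move=> h; apply/ffunP=> s; rewrite -!coordE h. Qed.

Lemma coordV_lin a x y i k : coordV (a *: x + y) i k = a * coordV x i k + coordV y i k.
Proof.
case: (ltnP k (n i)) => hk; last by rewrite !coordV_out // mulr0 addr0.
by rewrite -[k]/(nat_of_ord (Ordinal hk)) !coordV_in !ffunE.
Qed.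

Lemma coordV0 i k : coordV (0 : S) i k = 0.
Proof.
case: (ltnP k (n i)) => hk; last by rewrite !coordV_out.
by rewrite -[k]/(nat_of_ord (Ordinal hk)) !coordV_in !ffunE.
Qed.

Lemma coordV_sum (J : Type) (r : seq J) (P : pred J) (F : J -> S) i k :
  coordV (\sum_(j <- r | P j) F j) i k = \sum_(j <- r | P j) coordV (F j) i k.
Proof.
case: (ltnP k (n i)) => hk; last by rewrite coordV_out ?big1 // => j _; rewrite coordV_out.
rewrite -[k]/(nat_of_ord (Ordinal hk)) coordV_in sum_ffunE.
by apply: eq_bigr => j _; rewrite coordV_in.
Qed.

Definition mkc (i : I) (g : nat -> K) : S :=
  [ffun s : {j : I & 'I_(n j)} => if tag s == i then g (nat_of_ord (tagged s)) else 0].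

Lemma coordV_mkc i g j k :
  coordV (mkc i g) j k = if (j == i) && (k < n j)%N then g k else 0.
Proof.
case: (ltnP k (n j)) => hk; last by rewrite coordV_out // andbF.
by rewrite andbT -[k]/(nat_of_ord (Ordinal hk)) coordV_in ffunE.
Qed.

Definition prj (i : I) : 'Hom(S, S) := linfun (fun x => mkc i (coordV x i)).

Lemma prjE i x : prj i x = mkc i (coordV x i).
Proof.
apply: linfunE => a x1 y1; apply: coordV_ext => j k.
by rewrite coordV_lin !coordV_mkc coordV_lin; case: ifP; rewrite ?mulr0 ?addr0.
Qed.

Lemma coordV_prj i x j k : coordV (prj i x) j k = if j == i then coordV x j k else 0.
Proof.
rewrite prjE coordV_mkc; case: eqP => [->|] //=.
by case: ltnP => // hk; rewrite coordV_out.
Qed.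

Definition supp (i : I) : {vspace S} :=
  lker (linfun (fun x : S => [ffun s => if tag s == i then 0 else x s] : S)).

Lemma memv_supp x i : (x \in supp i) = (prj i x == x).
Proof.
rewrite memv_ker linfunE; last first.
  by move=> a x1 y1; apply/ffunP => s; rewrite !ffunE; case: ifP => _; rewrite ?scaler0 ?addr0.

apply/eqP/eqP => [h|h].
  apply: coordV_ext => j k; rewrite coordV_prj; case: eqP => // /eqP hj.
  case: (ltnP k (n j)) => hk; last by rewrite coordV_out.
  rewrite -[k]/(nat_of_ord (Ordinal hk)) coordV_in.
  by move/ffunP: h => /(_ (Tagged _ (Ordinal hk))); rewrite !ffunE /= (negPf hj).
apply/ffunP => s; rewrite !ffunE; case: eqP => // /eqP hs.
by rewrite -coordE -h coordV_prj (negPf hs).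
Qed.

Lemma supp_coord x i : (x \in supp i) = [forall j, forall k : 'I_(n j), (j != i) ==> (coordV x j k == 0)].
Abort.

Lemma prj_supp i j x : x \in supp j -> prj i x = if i == j then x else 0.
Proof.
rewrite memv_supp => /eqP h; case: eqP => [->//|/eqP hij].
apply: coordV_ext => l k; rewrite coordV_prj coordV0 -h coordV_prj.
by case: eqP => // ->; rewrite (negPf hij).
Qed.

Lemma coordV_supp0 x i j k : x \in supp i -> j != i -> coordV x j k = 0.
Proof. by rewrite memv_supp => /eqP <- hj; rewrite coordV_prj (negPf hj). Qed.

Lemma prj_in i x : prj i x \in supp i.
Proof.
rewrite memv_supp; apply/eqP/coordV_ext => j k; rewrite !coordV_prj.
by case: eqP.
Qed.

Lemma prjK i x : prj i (prj i x) = prj i x.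
Proof. by move: (prj_in i x); rewrite memv_supp => /eqP. Qed.

Lemma sum_prj x : x = \sum_i prj i x.
Proof.
apply: coordV_ext => j k; rewrite coordV_sum (bigD1 j) //= big1 ?addr0.
  by rewrite coordV_prj eqxx.
by move=> i /negPf hij; rewrite coordV_prj eq_sym hij.
Qed.


Lemma prj_sum_supp (us : I -> S) i :
  (forall j, us j \in supp j) -> prj i (\sum_j us j) = us i.
Proof.
move=> hu; rewrite linear_sum (bigD1 i) //= big1 ?addr0.
  by rewrite (prj_supp i (hu i)) eqxx.
by move=> j hj; rewrite (prj_supp i (hu j)) eq_sym (negPf hj).
Qed.

Lemma mem_sum_supp (Us : I -> {vspace S}) x :
  (forall i, (Us i <= supp i)%VS) ->
  (x \in (\sum_i Us i)%VS) = [forall i, prj i x \in Us i].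
Proof.
move=> hU; apply/memv_sumP/forallP => [[us hus ->] i|h].
  rewrite prj_sum_supp ?hus // => j; exact: (subvP (hU j)) (hus j isT).
by exists (fun i => prj i x); [move=> i _; apply: h | exact: sum_prj].
Qed.

Lemma directv_supp (Us : I -> {vspace S}) :
  (forall i, (Us i <= supp i)%VS) -> directv (\sum_i Us i).
Proof.
move=> hU; apply/directv_sum_independent => us hus h0 i _.
rewrite -(prj_sum_supp (us := us) i); first by rewrite h0 linear0.
by move=> j; exact: (subvP (hU j)) (hus j isT).
Qed.

Lemma dim_sum_supp (Us : I -> {vspace S}) :
  (forall i, (Us i <= supp i)%VS) -> \dim (\sum_i Us i) = (\sum_i \dim (Us i))%N.
Proof. by move=> hU; apply/directvP/directv_supp. Qed.

Definition splitv (W : {vspace S}) := forall i x, x \in W -> prj i x \in W.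

Lemma split_sum W : splitv W -> W = (\sum_i (W :&: supp i))%VS.
Proof.
move=> hW; apply/vspaceP => x; rewrite mem_sum_supp => [|i]; last exact: capvSr.
apply/idP/forallP => [xW i|h].
  by rewrite memv_cap hW // prj_in.
rewrite (sum_prj x) memv_suml // => i _.
by move/memv_capP: (h i) => [].
Qed.

Lemma dim_split W : splitv W -> \dim W = (\sum_i \dim (W :&: supp i))%N.
Proof.
move=> hW; rewrite {1}(split_sum hW) dim_sum_supp // => i; exact: capvSr.
Qed.

Lemma mkc_in i g : mkc i g \in supp i.
Proof.
rewrite memv_supp; apply/eqP/coordV_ext => j k; rewrite coordV_prj coordV_mkc.
by case: eqP => [->|]; rewrite ?eqxx.
Qed.

Lemma prj_mkc i x : mkc i (coordV x i) = prj i x.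
Proof. by rewrite prjE. Qed.

End Gen.
Arguments mkc {K I n} i g.
Arguments mkc_in {K I n} i g.
Arguments prj_mkc {K I n} i x.
Arguments prj {K I n} i.
Arguments supp {K I n} i.
Arguments splitv {K I n} W.

Lemma dim_transfer (K : fieldType) (V1 V2 : vectType K) (A : {vspace V1}) (B : {vspace V2})
  (f : 'Hom(V1, V2)) (g : 'Hom(V2, V1)) :
  (forall a, a \in A -> f a \in B /\ g (f a) = a) -> (\dim A <= \dim B)%N.
Proof.
move=> h; rewrite -(limg_dim_eq (f := f)).
  apply: dimvS; apply/subvP => y /memv_imgP [a aA ->]; by case: (h a aA).
apply/eqP; rewrite -subv0; apply/subvP => a /memv_capP [aA].
rewrite memv_ker memv0 => /eqP fa0.
by case: (h a aA) => _ <-; rewrite fa0 linear0.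
Qed.

Lemma dim_transfer_eq (K : fieldType) (V1 V2 : vectType K) (A : {vspace V1}) (B : {vspace V2})
  (f : 'Hom(V1, V2)) (g : 'Hom(V2, V1)) :
  (forall a, a \in A -> f a \in B /\ g (f a) = a) ->
  (forall b, b \in B -> g b \in A /\ f (g b) = b) -> \dim A = \dim B.
Proof.
by move=> h1 h2; apply/eqP; rewrite eqn_leq (dim_transfer h1) (dim_transfer h2).
Qed.

Lemma sum_fibre (I' I : finType) (phi : I' -> I) (f : I -> nat) (m : nat) :
  (forall i, #|[pred i' | phi i' == i]| = m) ->
  (\sum_(i' : I') f (phi i') = m * \sum_(i : I) f i)%N.
Proof.
move=> hm; rewrite (partition_big phi predT) //= big_distrr /=.
apply: eq_bigr => i _; rewrite (eq_bigr (fun _ => f i)); last by move=> i' /eqP ->.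
by rewrite sum_nat_const hm.
Qed.

Section GenCover.
Variables (K : fieldType) (I' I : finType) (phi : I' -> I) (n' : I' -> nat) (n : I -> nat).
Hypothesis hn : forall i', n' i' = n (phi i').
Local Notation S := (Fsp K n).
Local Notation S' := (Fsp K n').

Definition place (i' : I') : 'Hom(S, S') := linfun (fun y => mkc i' (coordV y (phi i'))).
Definition push (i' : I') : 'Hom(S', S) := linfun (fun x => mkc (phi i') (coordV x i')).

Lemma coord_place i' y j' k :
  coordV (place i' y) j' k = if (j' == i') && (k < n' j')%N then coordV y (phi i') k else 0.
Proof.
rewrite linfunE ?coordV_mkc // => a x1 y1; apply: coordV_ext => j k'.
by rewrite coordV_lin !coordV_mkc coordV_lin; case: ifP; rewrite ?mulr0 ?addr0.
Qed.

Lemma coord_push i' x j k :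
  coordV (push i' x) j k = if (j == phi i') && (k < n j)%N then coordV x i' k else 0.
Proof.
rewrite linfunE ?coordV_mkc // => a x1 y1; apply: coordV_ext => j' k'.
by rewrite coordV_lin !coordV_mkc coordV_lin; case: ifP; rewrite ?mulr0 ?addr0.
Qed.

Lemma push_place i' y : push i' (place i' y) = prj (phi i') y.
Proof.
apply: coordV_ext => j k; rewrite coord_push coordV_prj coord_place eqxx /=.
case: eqP => [-> | _]; last by rewrite andFb.
by rewrite hn /=; case: ltnP => // hk; rewrite coordV_out.
Qed.

Lemma push_place_neq j' i' y : j' != i' -> push j' (place i' y) = 0.
Proof.
move=> h; apply: coordV_ext => j k; rewrite coord_push coord_place (negPf h) coordV0.
by case: ifP.
Qed.

Lemma place_push i' x : place i' (push i' x) = prj i' x.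
Proof.
apply: coordV_ext => j k; rewrite coord_place coordV_prj coord_push eqxx /=.
case: eqP => [-> | _]; last by rewrite andFb.
by rewrite hn; case: ltnP => // hk; rewrite coordV_out // hn.
Qed.

Lemma place_in i' y : place i' y \in supp i'.
Proof.
rewrite memv_supp; apply/eqP/coordV_ext => j k; rewrite coordV_prj coord_place.
by case: eqP.
Qed.

Lemma push_in i' x : push i' x \in supp (phi i').
Proof.
rewrite memv_supp; apply/eqP/coordV_ext => j k; rewrite coordV_prj coord_push.
by case: eqP.
Qed.

Lemma push_prj i' j' x : push i' (prj j' x) = if j' == i' then push i' x else 0.
Proof.
apply: coordV_ext => j k; case: (eqVneq j' i') => [->|hne].
  by rewrite !coord_push coordV_prj eqxx.
by rewrite coordV0 coord_push coordV_prj (eq_sym i' j') (negPf hne); case: ifP.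
Qed.

Definition liftU (U : {vspace S}) : {vspace S'} := (\bigcap_(i' : I') (push i' @^-1: U))%VS.

Lemma mem_lift U x : (x \in liftU U) = [forall i', push i' x \in U].
Proof.
rewrite memvE; apply/subv_bigcapP/forallP => [h i'|h i' _].
  by rewrite memv_preim memvE h.
by rewrite -memvE -memv_preim.
Qed.

Lemma liftS U W : (U <= W)%VS -> (liftU U <= liftU W)%VS.
Proof.
move=> hUW; apply/subvP => x; rewrite !mem_lift => /forallP h.
by apply/forallP => i'; apply: (subvP hUW).
Qed.

Lemma lift_split U : splitv (liftU U).
Proof.
move=> j' x; rewrite !mem_lift => /forallP h; apply/forallP => i'.
by rewrite push_prj; case: eqP => _; rewrite ?mem0v.
Qed.

Lemma place_lift U i' y : y \in supp (phi i') -> (place i' y \in liftU U) = (y \in U).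
Proof.
move=> hy; rewrite mem_lift; apply/forallP/idP => [h|yU j'].
  by move: (h i'); rewrite push_place (prj_supp _ hy) eqxx.
case: (eqVneq j' i') => [->|hne]; first by rewrite push_place (prj_supp _ hy) eqxx.
by rewrite push_place_neq // mem0v.
Qed.

Lemma dim_lift_comp U i' : \dim (liftU U :&: supp i') = \dim (U :&: supp (phi i')).
Proof.
apply: (dim_transfer_eq (f := push i') (g := place i')) => a /memv_capP [h1 h2].
  split; last by rewrite place_push (prj_supp _ h2) eqxx.
  rewrite memv_cap push_in andbT; by move: h1; rewrite mem_lift => /forallP.
split; last by rewrite push_place (prj_supp _ h2) eqxx.
by rewrite memv_cap place_in andbT place_lift.
Qed.

Lemma dim_lift U m : splitv U -> (forall i, #|[pred i' | phi i' == i]| = m) ->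
  \dim (liftU U) = (m * \dim U)%N.
Proof.
move=> hU hm; rewrite dim_split; last exact: lift_split.
rewrite (eq_bigr (fun i' => \dim (U :&: supp (phi i')))); last by move=> i' _; apply: dim_lift_comp.
by rewrite (sum_fibre (fun i => \dim (U :&: supp i)) hm) -dim_split.
Qed.

Lemma place_push_gen i' j' x :
  place i' (push j' x) = if phi i' == phi j' then mkc i' (coordV (prj j' x) j') else 0.
Proof.
apply: coordV_ext => l k; rewrite coord_place coord_push.
case: (eqVneq (phi i') (phi j')) => hij /=; last first.
  by rewrite coordV0; case: ifP.
rewrite coordV_mkc coordV_prj eqxx.
case: (eqVneq l i') => [->|] //=; rewrite hn; by case: ltnP.
Qed.

Lemma place_prj i' j y : place i' (prj j y) = if phi i' == j then place i' y else 0.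
Proof.
apply: coordV_ext => l k; rewrite coord_place coordV_prj.
case: (eqVneq (phi i') j) => [hij|hj] /=; first by rewrite coord_place hij.
by rewrite coordV0; case: ifP.
Qed.

End GenCover.
Arguments place {K I' I} phi {n' n} i'.
Arguments push {K I' I} phi {n' n} i'.
Arguments liftU {K I' I} phi {n' n} U.
Arguments place_in {K I' I phi n' n} i' y.
Arguments push_in {K I' I phi n' n} i' x.
Arguments coord_place {K I' I phi n' n} i' y j' k.
Arguments coord_push {K I' I phi n' n} i' x j k.
Arguments push_prj {K I' I phi n' n} i' j' x.
Arguments push_place_neq {K I' I phi n' n} j' i' y.
Arguments mem_lift {K I' I phi n' n} U x.
Arguments liftS {K I' I phi n' n} U W.
Arguments lift_split {K I' I phi n' n} U.

Lemma exists_max (T : Type) (f : T -> nat) (B : nat) (t0 : T) :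
  (forall t, (f t <= B)%N) -> exists t, forall t', (f t' <= f t)%N.
Proof.
move=> hB; have [k] : exists k, (B - f t0 <= k)%N by exists (B - f t0)%N.
elim: k t0 => [|k IH] t0 hk.
  by exists t0 => t'; apply: leq_trans (hB t') _; rewrite -subn_eq0 -leqn0.
case: (classic (forall t', (f t' <= f t0)%N)) => [h|]; first by exists t0.
move/not_all_ex_not => [t1 /negP]; rewrite -ltnNge => h1.
apply: (IH t1); have := hB t1; lia.
Qed.

Section Sh.
Variables (K : fieldType) (G : digraph) (F : sheaf K G).
Local Notation nV := (shdimv F).
Local Notation nE := (shdime F).

Definition ep (b : bool) (e : edge G) := if b then hd e else tl e.
Definition rs (b : bool) (e : edge G) := if b then resh F e else rest F e.

Lemma SuppVE v : SuppV F v = supp v. Proof. by []. Qed.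
Lemma SuppEE e : SuppE F e = supp e. Proof. by []. Qed.

Lemma coord_dfun b w v i :
  coordV (dfun F b w) v i = if (i < nV v)%N then
    \sum_(e | ep b e == v) \sum_(0 <= j < nE e) coordV w e j * rs b e j i else 0.
Proof.
case: ltnP => hi; last by rewrite coordV_out.
rewrite -[i]/(nat_of_ord (Ordinal hi)) coordV_in ffunE /=.
apply: eq_bigr => e _; rewrite big_mkord; apply: eq_bigr => j _.
by rewrite coordV_in /rs; case: b.
Qed.

Lemma dmapE b w : dmap F b w = dfun F b w.
Proof.
apply: linfunE => a x y; apply: coordV_ext => v i.
rewrite coordV_lin !coord_dfun; case: ltnP => _; last by rewrite mulr0 addr0.
rewrite mulr_sumr -big_split /=; apply: eq_bigr => e _.
rewrite mulr_sumr -big_split /=; apply: eq_bigr => j _.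
by rewrite coordV_lin mulrDl mulrA.
Qed.

Lemma coord_dmap_supp b e w v i : w \in SuppE F e ->
  coordV (dmap F b w) v i = if (v == ep b e) && (i < nV v)%N then
    \sum_(0 <= j < nE e) coordV w e j * rs b e j i else 0.
Proof.
move=> hw; rewrite dmapE coord_dfun; case: ltnP => hi; last by rewrite andbF.
rewrite andbT; case: eqP => [->|hv].
  rewrite (bigD1 e) //= [X in _ + X]big1 ?addr0 // => e' /andP[_ he'].
  by apply: big1 => j _; rewrite (coordV_supp0 _ hw he') mul0r.
apply: big1 => e' /eqP he'; apply: big1 => j _.
have he : e' != e by apply/eqP => hee; apply: hv; rewrite -he' hee.
by rewrite (coordV_supp0 _ hw he) mul0r.
Qed.

Lemma dmap_supp b e w : w \in SuppE F e -> dmap F b w \in SuppV F (ep b e).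
Proof.
move=> hw; rewrite SuppVE memv_supp; apply/eqP/coordV_ext => v i.
rewrite coordV_prj; case: eqP => [->//|/eqP hv].
by rewrite (coord_dmap_supp _ _ _ hw) (negPf hv).
Qed.

Lemma mem_bigcap (I : finType) (P : pred I) (Us : I -> {vspace FV F}) x :
  (x \in (\bigcap_(i | P i) Us i)%VS) = [forall i, P i ==> (x \in Us i)].
Proof.
rewrite memvE; apply/subv_bigcapP/forallP => [h i|h i Pi].
  by apply/implyP => Pi; rewrite memvE h.
by rewrite -memvE; move/implyP: (h i); apply.
Qed.

Lemma mem_Gamma U x : (x \in Gamma_ht F U) =
  [forall e, (d_h F (prj e x) \in U) && (d_t F (prj e x) \in U)].
Proof.
rewrite /Gamma_ht mem_sum_supp => [|e]; last by rewrite -capvA capvSl.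
apply: eq_forallb => e; rewrite !memv_cap -!memv_preim prj_in.
by [].
Qed.

Lemma GammaS U W : (U <= W)%VS -> (Gamma_ht F U <= Gamma_ht F W)%VS.
Proof.
move=> hUW; apply/subvP => x; rewrite !mem_Gamma => /forallP h.
apply/forallP => e; case/andP: (h e) => h1 h2.
by rewrite (subvP hUW _ h1) (subvP hUW _ h2).
Qed.

Lemma Gamma_cap U W : Gamma_ht F (U :&: W) = (Gamma_ht F U :&: Gamma_ht F W)%VS.
Proof.
apply/vspaceP => x; rewrite memv_cap !mem_Gamma.
apply/forallP/andP => [h|[/forallP h1 /forallP h2] e].
  by split; apply/forallP => e; move: (h e); rewrite !memv_cap => /andP[/andP[? ?] /andP[? ?]]; apply/andP.
by move: (h1 e) (h2 e) => /andP[? ?] /andP[? ?]; rewrite !memv_cap; apply/andP; split; apply/andP.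
Qed.

Lemma excess_super U W :
  excess F U + excess F W <= excess F (U + W) + excess F (U :&: W).
Proof.
rewrite /excess Gamma_cap.
have h1 := dimv_sum_cap U W.
have h2 := dimv_sum_cap (Gamma_ht F U) (Gamma_ht F W).
have h3 : (\dim (Gamma_ht F U + Gamma_ht F W) <= \dim (Gamma_ht F (U + W)))%N.
  by apply: dimvS; rewrite subv_add !GammaS ?addvSl ?addvSr.
lia.
Qed.

Lemma excess_le U : excess F U <= (\dim {:FE F})%:Z.
Proof. rewrite /excess; have := dimvS (subvf (Gamma_ht F U)); lia. Qed.

Definition is_lmax (W : {vspace FV F}) :=
  (forall U, excess F U <= excess F W) /\
  (forall U, excess F U = excess F W -> (U <= W)%VS).

Lemma lmax_exists : exists W, is_lmax W.
Proof.
pose m U := (\dim (Gamma_ht F U) + (\dim {:FV F} - \dim U))%N.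
have mE U : excess F U = (m U)%:Z - (\dim {:FV F})%:Z.
  rewrite /excess /m; have := dimvS (subvf U); lia.
have [U0 hU0] : exists U0, forall U, (m U <= m U0)%N.
  apply: (exists_max (B := (\dim {:FE F} + \dim {:FV F})%N) 0%VS) => U.
  rewrite /m; have := dimvS (subvf (Gamma_ht F U)); lia.
pose T := {U | m U = m U0}.
have [[W hW] hWm] := @exists_max T (fun U => \dim (sval U)) (\dim {:FV F})
   (exist _ U0 erefl) (fun U => dimvS (subvf _)).
have hmax : forall U, excess F U <= excess F W.
  by move=> U; rewrite !mE hW; have := hU0 U; lia.
exists W; split; first exact: hmax.
move=> U hUW.
have hs := excess_super U W.
have h1 := hmax (U + W)%VS; have h2 := hmax (U :&: W)%VS.
have hm : m (U + W)%VS = m U0.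
  apply/eqP; rewrite eqn_leq hU0 /=.
  have : excess F (U + W) = excess F W by lia.
  by rewrite !mE hW; lia.
have := hWm (exist _ (U + W)%VS hm) => /= hd.
have : W == (U + W)%VS by rewrite eqEdim addvSr hd.
by move/eqP ->; rewrite addvSl.
Qed.

Lemma lmax_uniq W1 W2 : is_lmax W1 -> is_lmax W2 -> W1 = W2.
Proof.
move=> [h1 h1'] [h2 h2']; have e : excess F W1 = excess F W2.
  by apply/eqP; rewrite eq_le h1 h2.
by apply/subv_anti; rewrite h2' // h1'.
Qed.

Lemma lmax_split W : is_lmax W -> splitv W.
Proof.
move=> [hmax hsub].
pose Ws := (\bigcap_v (prj v @^-1: W))%VS.
have memWs x : (x \in Ws) = [forall v, prj v x \in W].
  rewrite mem_bigcap; apply: eq_forallb => v; by rewrite -memv_preim.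
have sWsW : (Ws <= W)%VS.
  apply/subvP => x; rewrite memWs => /forallP h.
  by rewrite (sum_prj x) memv_suml // => v _; apply: h.
have sG : (Gamma_ht F W <= Gamma_ht F Ws)%VS.
  apply/subvP => x; rewrite !mem_Gamma => /forallP h; apply/forallP => e.
  case/andP: (h e) => h1 h2; rewrite !memWs; apply/andP; split; apply/forallP => v.
    rewrite (prj_supp v (dmap_supp true (prj_in e x))).
    by case: eqP => _; rewrite ?mem0v.
  rewrite (prj_supp v (dmap_supp false (prj_in e x))).
  by case: eqP => _; rewrite ?mem0v.
have hle := hmax Ws; move: hle; rewrite /excess => hle.
have := dimvS sG => hg.
have eW : Ws = W.
  apply/eqP; rewrite eqEdim sWsW /=; move: hle hg.
  set a1 := \dim Ws; set a2 := \dim W; set a3 := \dim (Gamma_ht F Ws); set a4 := \dim (Gamma_ht F W); lia.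
move=> v x xW; have : x \in Ws by rewrite eW.
by rewrite memWs => /forallP.
Qed.

End Sh.
Arguments is_lmax {K G} F W.
Arguments lmax_exists {K G} F.

Definition relpb (K : fieldType) (G' G : digraph) (phiV : vert G' -> vert G)
  (phiE : edge G' -> edge G) (F : sheaf K G) (F' : sheaf K G') :=
  [/\ forall v', shdimv F' v' = shdimv F (phiV v'),
      forall e', shdime F' e' = shdime F (phiE e'),
      forall e', resh F' e' = resh F (phiE e') &
      forall e', rest F' e' = rest F (phiE e')].

Section Cov.
Variables (K : fieldType) (G' G : digraph) (phiV : vert G' -> vert G)
  (phiE : edge G' -> edge G) (F : sheaf K G) (F' : sheaf K G').
Hypothesis hpb : relpb phiV phiE F F'.
Hypothesis hmor : is_morphism phiV phiE.

Let hV : forall v', shdimv F' v' = shdimv F (phiV v'). Proof. by case: hpb. Qed.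
Let hE : forall e', shdime F' e' = shdime F (phiE e'). Proof. by case: hpb. Qed.
Let hrs : forall b e', rs F' b e' = rs F b (phiE e').
Proof. by case: hpb => _ _ h1 h2 [] e'; rewrite /rs. Qed.
Let hep : forall b e', ep b (phiE e') = phiV (ep b e').
Proof. by case: hmor => h1 h2 [] e'; rewrite /ep. Qed.

Lemma dmap_place b e' w : w \in SuppE F (phiE e') ->
  dmap F' b (place phiE e' w) =
  place phiV (ep b e') (dmap F b w).
Proof.
move=> hw; apply: coordV_ext => v' k.
rewrite (coord_dmap_supp _ _ _ (place_in _ _)) coord_place.
case: eqP => [->|]; last by rewrite !andFb.
rewrite /= (coord_dmap_supp _ _ _ hw) hep eqxx /= -hV.
case: ltnP => // hk; rewrite hE big_nat_cond [RHS]big_nat_cond.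
apply: eq_bigr => j /andP[/andP[_ hj] _].
by rewrite coord_place eqxx /= hE hj hrs.
Qed.


Lemma dim_Gamma_lift U m : (forall e, #|[pred e' | phiE e' == e]| = m) ->
  \dim (Gamma_ht F' (liftU phiV U)) = (m * \dim (Gamma_ht F U))%N.
Proof.
move=> hm; rewrite /Gamma_ht !dim_sum_supp; first last.
- by move=> e; rewrite -capvA capvSl.
- by move=> e; rewrite -capvA capvSl.
rewrite -(sum_fibre (fun e => \dim (SuppE F e :&: (d_h F @^-1: U) :&: (d_t F @^-1: U))) hm).
apply: eq_bigr => e' _; apply: (dim_transfer_eq (f := push phiE e')
   (g := place phiE e')) => w.
  rewrite !memv_cap -!memv_preim => /andP[/andP[hw h1] h2].
  have ew : place phiE e' (push phiE e' w : FE F) = w.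
    by rewrite place_push // (prj_supp _ hw) eqxx.
  have hpw : push phiE e' w \in SuppE F (phiE e') by exact: push_in.
  have s1 b : dmap F b (push phiE e' w) \in supp (phiV (ep b e')).
    by rewrite -hep; apply: dmap_supp.
  split=> //; rewrite hpw /=.
  move: h1 h2; rewrite -{1 2}ew !dmap_place //.
  move: (place_lift hV U (s1 true)) (place_lift hV U (s1 false)) => e1 e2 h1 h2.
  by apply/andP; split; [exact: (etrans (esym e1) h1) | exact: (etrans (esym e2) h2)].
rewrite !memv_cap -!memv_preim => /andP[/andP[hw h1] h2].
split; last by rewrite push_place // (prj_supp _ hw) eqxx.
have s1 b : dmap F b w \in supp (phiV (ep b e')).
  by rewrite -hep; apply: dmap_supp.
rewrite place_in /= !dmap_place //.
move: (place_lift hV U (s1 true)) (place_lift hV U (s1 false)) => e1 e2.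
by apply/andP; split; [exact: (etrans e1 h1) | exact: (etrans e2 h2)].
Qed.

Lemma excess_lift U m : splitv U ->
  (forall v, #|[pred v' | phiV v' == v]| = m) ->
  (forall e, #|[pred e' | phiE e' == e]| = m) ->
  excess F' (liftU phiV U) = m%:Z * excess F U.
Proof.
move=> hU hmV hmE; rewrite /excess (dim_Gamma_lift _ hmE) (dim_lift hV hU hmV).
by rewrite !PoszM mulrBr.
Qed.

End Cov.

Lemma card_fib (T S : finType) (A : {pred T}) (B : {pred S}) (f : T -> S) :
  {in A &, injective f} -> (forall s, reflect (exists2 t, t \in A & s = f t) (s \in B)) ->
  #|A| = #|B|.
Proof.
move=> hinj hB; rewrite -(card_in_image hinj); apply: eq_card => s.
by apply/imageP/hB.
Qed.

Definition sel (T : Type) (k : bool) (p : T * T) := if k then p.1 else p.2.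
Definition oth (T : Type) (k : bool) (p : T * T) := if k then p.2 else p.1.
Definition mkp (T : Type) (k : bool) (a b : T) := if k then (a, b) else (b, a).

Lemma sel_mkp T k (a b : T) : sel k (mkp k a b) = a. Proof. by case: k. Qed.
Lemma oth_mkp T k (a b : T) : oth k (mkp k a b) = b. Proof. by case: k. Qed.
Lemma mkp_eta T k (p : T * T) : p = mkp k (sel k p) (oth k p). Proof. by case: k; case: p. Qed.

Section FP.
Variables (G' G : digraph) (phiV : vert G' -> vert G) (phiE : edge G' -> edge G).
Hypothesis hcov : is_covering phiV phiE.

Lemma cov_hep b e' : ep b (phiE e') = phiV (ep b e').
Proof. by case: hcov => [[h1 h2] _] ; case: b; rewrite /ep. Qed.

Lemma cov_ul b v' e : ep b e = phiV v' -> exists! e', ep b e' = v' /\ phiE e' = e.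
Proof. by case: hcov => _ [h1 h2]; case: b; [apply: h1 | apply: h2]. Qed.

Lemma cov_inj b a a' : phiE a = phiE a' -> ep b a = ep b a' -> a = a'.
Proof.
move=> hf he; have [e0 [_ hu]] := @cov_ul b (ep b a) _ (@cov_hep b a).
by rewrite -(hu a (conj erefl erefl)) (hu a' (conj (esym he) (esym hf))).
Qed.

Definition vpred (p : vert G' * vert G') := (phiV p.1 == phiV p.2) && (p.1 != p.2).
Definition epred (p : edge G' * edge G') :=
  [&& phiE p.1 == phiE p.2, hd p.1 != hd p.2, tl p.1 != tl p.2,
      phiV (hd p.1) == phiV (hd p.2) & phiV (tl p.1) == phiV (tl p.2)].

Definition VP := {p : vert G' * vert G' | vpred p}.
Definition EP := {p : edge G' * edge G' | epred p}.

Lemma hd_vpred (q : EP) : vpred (hd (val q).1, hd (val q).2).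
Proof. by case: q => p /= /and5P[_ h _ hv _]; rewrite /vpred /= hv. Qed.
Lemma tl_vpred (q : EP) : vpred (tl (val q).1, tl (val q).2).
Proof. by case: q => p /= /and5P[_ _ h _ hv]; rewrite /vpred /= hv. Qed.

Definition hdP (q : EP) : VP := exist vpred _ (hd_vpred q).
Definition tlP (q : EP) : VP := exist vpred _ (tl_vpred q).

Definition GP : digraph := @Digraph _ _ tlP hdP.

Definition pV (k : bool) (q : vert GP) : vert G' := sel k (val q).
Definition pE (k : bool) (q : edge GP) : edge G' := sel k (val q).

Lemma epred_mk k a b : phiE a = phiE b -> a != b -> epred (mkp k a b).
Proof.
move=> hab hne.
have hneq c : ep c a != ep c b.
  by apply/eqP => h; move/eqP: hne; apply; apply: (cov_inj hab h).
have hv c : phiV (ep c a) = phiV (ep c b) by rewrite -!cov_hep hab.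
have := hneq true; have := hneq false; have := hv true; have := hv false.
rewrite /ep => h1 h2 h3 h4.
case: k; rewrite /epred /= hab eqxx h1 h2 ?eqxx ?h3 ?h4 //=.
by rewrite !(eq_sym (hd b)) !(eq_sym (tl b)) h3 h4.
Qed.

Lemma epred_phi (p : edge G' * edge G') : epred p -> phiE p.1 = phiE p.2.
Proof. by case/and5P => /eqP. Qed.

Lemma epred_phik k (p : edge G' * edge G') : epred p -> phiE (oth k p) = phiE (sel k p).
Proof. by move/epred_phi; case: k. Qed.

Lemma epred_neq (p : edge G' * edge G') : epred p -> p.1 != p.2.
Proof. by case/and5P => _ h _ _ _; apply: contraNneq h => ->. Qed.

Lemma vpred_mk k x y : phiV x = phiV y -> x != y -> vpred (mkp k x y).
Proof.
move=> h hne; case: k; rewrite /vpred /= h eqxx //=.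
by rewrite eq_sym.
Qed.

Lemma ep_GP b (q : edge GP) : val (ep b q) = (ep b (val q).1, ep b (val q).2).
Proof. by case: b. Qed.

Lemma mkp_map (T T' : Type) (f : T -> T') k (a b : T) :
  (f (mkp k a b).1, f (mkp k a b).2) = mkp k (f a) (f b).
Proof. by case: k. Qed.

Lemma pcov k : is_covering (pV k) (pE k).
Proof.
split.
  by split => q; case: k.
suff H b : forall (v' : vert GP) (e : edge G'), ep b e = pV k v' ->
    exists! e' : edge GP, ep b e' = v' /\ pE k e' = e.
  by split; [apply: (H true) | apply: (H false)].
move=> q a hqa.
have hq : vpred (val q) := valP q.
have eq : val q = mkp k (sel k (val q)) (oth k (val q)) by apply: mkp_eta.
move: hqa eq hq; rewrite /pV.
move: (sel k (val q)) (oth k (val q)) => x y hqa eq hq.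
have hxy : phiV x = phiV y /\ x != y.
  move: hq; rewrite /vpred eq; case: k {eq} => /andP[/eqP h1 h2] //.
  by rewrite h1 eq_sym.
have hy : ep b (phiE a) = phiV y by rewrite cov_hep hqa (proj1 hxy).
have [c [[hc1 hc2] hcu]] := cov_ul hy.
have hac : phiE a = phiE c by rewrite hc2.
have hne : a != c.
  apply/eqP => hac'; move: (proj2 hxy); rewrite -hqa -hc1 -hac'.
  by rewrite eqxx.
exists (exist epred _ (epred_mk k hac hne) : edge GP); split.
  split; last by rewrite /pE /= sel_mkp.
  by apply: val_inj; rewrite ep_GP /= mkp_map eq hqa hc1.
move=> q' [hq1 hq2]; apply: val_inj => /=.
rewrite (mkp_eta k (val q')); congr (mkp k _ _); first exact: (esym hq2).
have hp := valP q'.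
have e1 : phiE (oth k (val q')) = phiE a.
  by rewrite -hq2 /pE (epred_phik k hp).
apply: hcu; split; last by rewrite e1.
move/(congr1 val): hq1; rewrite ep_GP (mkp_eta k (val q')) mkp_map eq.
by rewrite -(mkp_eta k (val q')) => /(congr1 (oth k)); rewrite !oth_mkp.
Qed.

Lemma vpred_k k (p : vert G' * vert G') : vpred p ->
  phiV (oth k p) = phiV (sel k p) /\ oth k p != sel k p.
Proof. by case/andP => /eqP h1 h2; case: k => //=; rewrite eq_sym. Qed.

Lemma epred_neqk k (p : edge G' * edge G') : epred p -> oth k p != sel k p.
Proof. by move/epred_neq; case: k => //=; rewrite eq_sym. Qed.

Lemma card_minus1 (T : finType) (P : pred T) (x : T) d :
  P x -> #|P| = d.+1 -> #|[pred y | P y && (y != x)]| = d.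
Proof.
move=> hx; rewrite (cardD1 x); have -> : x \in P by [].
rewrite add1n => -[<-].
by apply: eq_card => y; rewrite !inE /= andbC.
Qed.

Lemma neq_sym (T : eqType) (x y : T) : y != x -> x != y.
Proof. by rewrite eq_sym. Qed.

Lemma card_pV k d x : #|[pred v' | phiV v' == phiV x]| = d.+1 ->
  #|[pred q : vert GP | pV k q == x]| = d.
Proof.
move=> hd; rewrite -(card_minus1 (x := x) _ hd) ?inE //.
apply: (card_fib (f := fun q : vert GP => oth k (val q))).
  move=> q1 q2; rewrite !inE /pV => /eqP h1 /eqP h2 ho; apply: val_inj.
  by rewrite (mkp_eta k (val q1)) (mkp_eta k (val q2)) h1 h2 ho.
move=> y; apply: (iffP idP) => [|[q]].
  move=> /= /andP[/eqP hy hne].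
  exists (exist vpred _ (vpred_mk k (esym hy) (neq_sym hne)) : vert GP).
    by rewrite inE /pV /= sel_mkp.
  by rewrite /= oth_mkp.
rewrite inE /pV => /eqP hx ->; have [h1 h2] := vpred_k k (valP q).
by rewrite !inE h1 hx eqxx -hx h2.
Qed.

Lemma card_pE k d a : #|[pred e' | phiE e' == phiE a]| = d.+1 ->
  #|[pred q : edge GP | pE k q == a]| = d.
Proof.
move=> hd; rewrite -(card_minus1 (x := a) _ hd) ?inE //.
apply: (card_fib (f := fun q : edge GP => oth k (val q))).
  move=> q1 q2; rewrite !inE /pE => /eqP h1 /eqP h2 ho; apply: val_inj.
  by rewrite (mkp_eta k (val q1)) (mkp_eta k (val q2)) h1 h2 ho.
move=> b; apply: (iffP idP) => [|[q]].
  move=> /= /andP[/eqP hb hne].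
  have hne' : a != b by rewrite eq_sym.
  exists (exist epred _ (epred_mk k (esym hb) hne') : edge GP).
    by rewrite inE /pE /= sel_mkp.
  by rewrite /= oth_mkp.
rewrite inE /pE => /eqP ha ->.
by rewrite !inE (epred_phik k (valP q)) ha eqxx -ha (epred_neqk k (valP q)).
Qed.

End FP.

Section Step.
Variables (K : fieldType) (G' G : digraph) (phiV : vert G' -> vert G)
  (phiE : edge G' -> edge G) (F : sheaf K G) (F' : sheaf K G').
Hypothesis hpb : relpb phiV phiE F F'.

Local Notation p1V := (@pV _ _ phiV phiE true).
Local Notation p2V := (@pV _ _ phiV phiE false).
Local Notation p1E := (@pE _ _ phiV phiE true).
Local Notation p2E := (@pE _ _ phiV phiE false).

Definition F2 := pullback p1V p1E F'.

Lemma relpb_p1 : relpb p1V p1E F' F2.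
Proof. by split. Qed.

Lemma relpb_p2 : relpb p2V p2E F' F2.
Proof.
case: hpb => h1 h2 h3 h4; split => q /=.
- rewrite h1 h1; congr shdimv; have [-> _] := vpred_k true (valP q); by [].
- rewrite h2 h2; congr shdime; by rewrite /pE (epred_phik true (valP q)).
- rewrite h3 h3; congr resh; by rewrite /pE (epred_phik true (valP q)).
- rewrite h4 h4; congr rest; by rewrite /pE (epred_phik true (valP q)).
Qed.


Hypothesis hcov : is_covering phiV phiE.
Variable d : nat.
Hypothesis hfV : forall v, #|[pred v' | phiV v' == v]| = d.+1.
Hypothesis hfE : forall e, #|[pred e' | phiE e' == e]| = d.+1.

Definition Pind (d : nat) := forall (G' G : digraph) (phiV : vert G' -> vert G)
  (phiE : edge G' -> edge G) (F : sheaf K G) (F' : sheaf K G'),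
  is_covering phiV phiE ->
  (forall v, #|[pred v' | phiV v' == v]| = d) ->
  (forall e, #|[pred e' | phiE e' == e]| = d) ->
  relpb phiV phiE F F' -> forall V, is_lmax F V -> is_lmax F' (liftU phiV V).

Hypothesis IH : Pind d.

Let hV' : forall v', shdimv F' v' = shdimv F (phiV v'). Proof. by case: hpb. Qed.
Let hV2 : forall q, shdimv (F2) q = shdimv F' (p2V q). Proof. by case: relpb_p2. Qed.

Lemma const_W W : is_lmax F' W -> forall x y, phiV x = phiV y ->
  forall c : FV F', c \in SuppV F' y -> (mkc x (coordV c y) \in W) = (c \in W).
Proof.
move=> hW x y hxy c hc.
case: (eqVneq x y) => [->|hne]; first by rewrite prj_mkc (prj_supp _ hc) eqxx.
have h1 : is_lmax F2 (liftU p1V W).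
  apply: (IH (pcov hcov true) _ _ relpb_p1 hW).
  - by move=> x'; apply: card_pV => //; apply: hfV.
  - by move=> a; apply: card_pE => //; apply: hfE.
have h2 : is_lmax F2 (liftU p2V W).
  apply: (IH (pcov hcov false) _ _ relpb_p2 hW).
  - by move=> x'; apply: card_pV => //; apply: hfV.
  - by move=> a; apply: card_pE => //; apply: hfE.
have eL := lmax_uniq h1 h2.
pose q : vert (GP phiV phiE) := exist (vpred phiV) (y, x) (@vpred_mk _ _ phiV true _ _ (esym hxy) (neq_sym hne)).
have e1 := place_lift (phi := p1V) (n' := shdimv F2) (fun _ => erefl) W (i' := q) hc.
have e2 := place_lift (phi := p2V) (n' := shdimv F2) hV2 W (i' := q) (mkc_in x (coordV c y)).
have ez : place p1V q c = place p2V q (mkc x (coordV c y) : FV F') :> FV F2.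
  apply: coordV_ext => l k; rewrite !coord_place coordV_mkc /=.
  case: eqP => [->|] //=; case: ltnP => // hk.
  by rewrite eqxx /= hV' hxy -hV' hk.
rewrite -e2 -ez -eL e1.
by [].
Qed.


Lemma step_lmax V : is_lmax F V -> is_lmax F' (liftU phiV V).
Proof.
move=> hVm.
have [W hW] := lmax_exists F'.
have Wsp := lmax_split hW.
pose U : {vspace FV F} := (\bigcap_(x : vert G') (place phiV x @^-1: W))%VS.
have memU y : (y \in U) = [forall x, place phiV x y \in W].
  by rewrite mem_bigcap; apply: eq_forallb => x; rewrite -memv_preim.
have Usp : splitv U.
  move=> v y; rewrite !memU => /forallP h; apply/forallP => x.
  rewrite place_prj; case: eqP => _; [exact: h | exact: mem0v].
have eW : liftU phiV U = W.
  apply/vspaceP => x'; rewrite mem_lift; apply/forallP/idP => [h|hx v'].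
    rewrite (sum_prj x') memv_suml // => v' _.
    move: (h v'); rewrite memU => /forallP/(_ v').
    by rewrite (place_push hV').
  rewrite memU; apply/forallP => x.
  rewrite (place_push_gen hV'); case: eqP => hx0; last exact: mem0v.
  rewrite (const_W hW hx0 (prj_in v' x')).
  exact: Wsp.
have hmor : is_morphism phiV phiE by case: hcov.
have e1 : excess F' W = (d.+1)%:Z * excess F U.
  by rewrite -eW (excess_lift hpb hmor Usp hfV hfE).
have e2 : excess F' (liftU phiV V) = (d.+1)%:Z * excess F V.
  exact: (excess_lift hpb hmor (lmax_split hVm) hfV hfE).
have le1 := proj1 hW (liftU phiV V).
have le2 := proj1 hVm U.
have eUV : excess F U = excess F V.
  apply/eqP; rewrite eq_le le2 /=.
  rewrite -(@ler_pM2l _ (d.+1)%:Z) // -e1 -e2; exact: le1.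
have sUV : (U <= V)%VS := proj2 hVm U eUV.
have s1 : (W <= liftU phiV V)%VS by rewrite -eW; apply: liftS.
have s2 : (liftU phiV V <= W)%VS.
  by apply: (proj2 hW); rewrite e1 e2 eUV.
have -> : liftU phiV V = W by apply/subv_anti; rewrite s1 s2.
exact: hW.
Qed.

End Step.

Lemma allzero (K : fieldType) (V : vectType K) (U : {vspace V}) :
  (forall x : V, x = 0) -> U = 0%VS.
Proof.
move=> h; apply/vspaceP => x; by rewrite (h x) mem0v memv0 eqxx.
Qed.

Lemma Pind0 (K : fieldType) : Pind K 0.
Proof.
move=> G' G phiV phiE F F' hcov hfV hfE hpb V hV.
have noV : forall v' : vert G', False.
  move=> v'; move/card0_eq: (hfV (phiV v')) => /(_ v').
  by rewrite !inE eqxx.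
have noE : forall e' : edge G', False.
  move=> e'; move/card0_eq: (hfE (phiE e')) => /(_ e').
  by rewrite !inE eqxx.
have zV : forall x : FV F', x = 0.
  by move=> x; apply: coordV_ext => v'; case: (noV v').
have zE : forall x : FE F', x = 0.
  by move=> x; apply: coordV_ext => e'; case: (noE e').
have ex0 : forall U, excess F' U = 0.
  move=> U; rewrite /excess (allzero (Gamma_ht F' U) zE); have hU : U = 0%VS by exact: allzero. by rewrite hU !dimv0.
split; first by move=> U; rewrite !ex0.
by move=> U _; rewrite (allzero U zV) sub0v.
Qed.

Lemma Pind_all (K : fieldType) d : Pind K d.
Proof.
elim: d => [|d IH]; first exact: Pind0.
move=> G' G phiV phiE F F' hcov hfV hfE hpb V hV.
exact: (step_lmax hpb hcov hfV hfE IH hV).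
Qed.

Unset Implicit Arguments.
Theorem theorem1 (K : fieldType) (G' G : digraph)
  (phiV : vert G' -> vert G) (phiE : edge G' -> edge G) (d : nat)
  (F : sheaf K G) :
  is_covering phiV phiE ->
  (forall v : vert G, #|[pred v' | phiV v' == v]| = d) ->
  (forall e : edge G, #|[pred e' | phiE e' == e]| = d) ->
  (exists z : int, is_max_excess F z /\
                   is_max_excess (pullback phiV phiE F) (d%:Z * z)) /\
  (forall Uv : vert G -> {vspace FV F},
     (forall v, (Uv v <= SuppV F v)%VS) ->
     attains_max_excess F (\sum_(v : vert G) Uv v)%VS ->
     attains_max_excess (pullback phiV phiE F)
       (\sum_(v' : vert G') ((liftV phiV (shdimv F) v') @: Uv (phiV v')))%VS).
Proof.
move=> hcov hfV hfE.
have hpb : relpb phiV phiE F (pullback phiV phiE F) by split.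
have [V hV] := lmax_exists F.
have hL := Pind_all hcov hfV hfE hpb hV.
have hmor : is_morphism phiV phiE by case: hcov.
have eL := excess_lift hpb hmor (lmax_split hV) hfV hfE.
split.
  exists (excess F V); split.
    by split; [exists V | exact: (proj1 hV)].
  split; first by exists (liftU phiV V).
  by move=> U; rewrite -eL; exact: (proj1 hL).
move=> Uv hUv hmax.
have memY y : (y \in (\sum_v Uv v)%VS) = [forall v, prj v y \in Uv v].
  exact: mem_sum_supp.
have Ysp : splitv (\sum_v Uv v)%VS.
  move=> v y; rewrite !memY => /forallP h; apply/forallP => w.
  rewrite (prj_supp _ (prj_in v y)); case: eqP => [->|_]; [exact: h | exact: mem0v].
have eP : forall v', liftV phiV (shdimv F) v' =
   place phiV v' :> 'Hom(FV F, FV (pullback phiV phiE F)) by [].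
have eS : (\sum_(v' : vert G') ((liftV phiV (shdimv F) v') @: Uv (phiV v')))%VS =
   liftU phiV (n' := shdimv (pullback phiV phiE F)) (\sum_v Uv v)%VS.
  rewrite (eq_bigr _ (fun v' _ => congr1 (fun f => f @: Uv (phiV v'))%VS (eP v'))).
  apply/vspaceP => x; rewrite mem_sum_supp; last by move=> v'; apply/subvP => z /memv_imgP[u _ ->]; apply: place_in.
  rewrite mem_lift; apply: eq_forallb => v'.
  have -> : (push phiV v' x \in (\sum_v Uv v)%VS) = (push phiV v' x \in Uv (phiV v')).
    rewrite memY; apply/forallP/idP => [/(_ (phiV v'))|h w].
      by rewrite (prj_supp _ (push_in v' x)) eqxx.
    by rewrite (prj_supp _ (push_in v' x)); case: eqP => [->//|_]; exact: mem0v.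
  apply/idP/idP => [/memv_imgP[u hu hxu]|h].
    have <- : (push phiV v' (prj v' x) : FV F) = push phiV v' x by rewrite push_prj eqxx.
    rewrite hxu (push_place (phi := phiV) (n' := shdimv (pullback phiV phiE F)) (fun _ => erefl)).
    by rewrite (prj_supp _ (subvP (hUv _) _ hu)) eqxx.
  by rewrite -(place_push (phi := phiV) (n' := shdimv (pullback phiV phiE F)) (fun _ => erefl)); apply: memv_img.
move=> U'; rewrite eS (excess_lift hpb hmor Ysp hfV hfE).
have -> : excess F (\sum_v Uv v)%VS = excess F V.
  by apply/eqP; rewrite eq_le (proj1 hV) hmax.
by rewrite -eL; exact: (proj1 hL).
Qed.
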